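(* Let $\pi=(\pi_n^{n+1}\colon(X_{n+1},f_{n+1})\to(X_n,f_n))_{n\ge1}$ be an inverse sequence of equivariant maps satisfying MLC(1), and suppose $(X_n,f_n)$ is a subshift of finite type for each $n\ge1$. Let $Y_n=CR(f_n)$, $g_n=f_n|_{Y_n}$, and $\tilde\pi_n^{n+1}=\pi_n^{n+1}|_{Y_{n+1}}\colon Y_{n+1}\to Y_n$. Then the inverse sequence $\tilde\pi=(\tilde\pi_n^{n+1}\colon(Y_{n+1},g_{n+1})\to(Y_n,g_n))_{n\ge1}$ satisfies MLC(1).
   Context: Equivariant means $\pi_n^{n+1}$ is continuous with $f_n\circ\pi_n^{n+1}=\pi_n^{n+1}\circ f_{n+1}$. For $m\ge n$, $\pi_n^m=\pi_n^{n+1}\circ\cdots\circ\pi_{m-1}^m$. An inverse sequence $(p_n\colon Z_{n+1}\to Z_n)$ satisfies MLC(1) if $p_n(Z_{n+1})=p_n(p_{n+1}(Z_{n+2}))$ for every $n$. A subshift of finite type is a system $(Z,\sigma|_Z)$ where $S$ is a finite discrete set, $\sigma\colon S^{\mathbb N}\to S^{\mathbb N}$, $\sigma((x_i)_{i\ge1})=(x_{i+1})_{i\ge1}$, is the shift on the product space, and there are $N>0$ and $F\subset S^{N+1}$ with $Z=\{x\in S^{\mathbb N}:(x_i,\dots,x_{i+N})\in F\ \forall i\ge1\}$. For a continuous map $g$ of a compact metric space $(Y,d)$, $CR(g)$ is the set of $y$ such that for every $\delta>0$ there is a finite sequence $y=y_0,y_1,\dots,y_k=y$, $k>0$, with $d(g(y_i),y_{i+1})\le\delta$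 for all $i<k$. *)

(* Defs.v *)
From mathcomp Require Import all_boot.
Set Implicit Arguments. Unset Strict Implicit. Unset Printing Implicit Defensive.

(* One-sided sequences S^N, indexed from 0 (the paper indexes from 1). *)
Definition shift {S : Type} (x : nat -> S) : nat -> S := fun i => x i.+1.

(* x and y agree on the first k coordinates, i.e. d(x,y) <= 2^-k for the
   standard metric d(x,y) = 2^-(min{i | x i <> y i}) on S^N. *)
Definition agree {S : Type} (k : nat) (x y : nat -> S) : Prop :=
  forall i, i < k -> x i = y i.

Definition SFT (S : finType) (Z : (nat -> S) -> Prop) : Prop :=
  exists (N : nat) (F : pred (seq S)), 0 < N /\
    forall x, Z x <-> (forall i, F [seq x (i + j) | j <- iota 0 N.+1]).

(* p is continuous on Z (product topology of discrete spaces, i.e. w.r.t.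
   the metric above). *)
Definition cont_on {S T : Type} (Z : (nat -> S) -> Prop)
  (p : (nat -> S) -> (nat -> T)) : Prop :=
  forall x, Z x -> forall k, exists m, forall y, Z y -> agree m x y ->
    agree k (p x) (p y).

(* Chain recurrent set CR(sigma|_Z): y \in Z such that for every delta > 0
   (delta = 2^-k) there is a delta-chain y = y_0, ..., y_m = y with m > 0
   in Z and d(sigma(y_i), y_{i+1}) <= delta. *)
Definition CR {S : Type} (Z : (nat -> S) -> Prop) (y : nat -> S) : Prop :=
  Z y /\ forall k, exists (m : nat) (c : nat -> (nat -> S)),
    [/\ 0 < m, c 0 = y, c m = y,
        (forall i, i <= m -> Z (c i)) &
        (forall i, i < m -> agree k (shift (c i)) (c i.+1))].

Definition img {A B : Type} (p : A -> B) (Z : A -> Prop) : B -> Prop :=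
  fun b => exists a, Z a /\ p a = b.

Definition set_eq {A : Type} (P Q : A -> Prop) : Prop := forall a, P a <-> Q a.

Definition MLC1 (S : nat -> Type) (Z : forall n, (nat -> S n) -> Prop)
  (p : forall n, (nat -> S n.+1) -> (nat -> S n)) : Prop :=
  forall n, set_eq (img (p n) (Z n.+1)) (img (p n) (img (p n.+1) (Z n.+2))).

(* Main.v *)
Require Import Defs.
From mathcomp Require Import all_boot.
From Stdlib Require Import Classical ClassicalEpsilon FunctionalExtensionality.
Set Implicit Arguments. Unset Strict Implicit.

Definition sh {S : Type} (j : nat) (x : nat -> S) : nat -> S := fun i => x (j + i).

Lemma shiftS {S : Type} j (x : nat -> S) : shift (sh j x) = sh j.+1 x.
Proof. apply: functional_extensionality => i; by rewrite /shift /sh addSnnS. Qed.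

Lemma sh0 {S : Type} (x : nat -> S) : sh 0 x = x.
Proof. by apply: functional_extensionality => i; rewrite /sh add0n. Qed.

Lemma agree_sym {S : Type} k (x y : nat -> S) : agree k x y -> agree k y x.
Proof. by move=> H i hi; rewrite H. Qed.
Lemma agree_trans {S : Type} k (x y z : nat -> S) : agree k x y -> agree k y z -> agree k x z.
Proof. by move=> H1 H2 i hi; rewrite H1 ?H2. Qed.
Lemma agree_le {S : Type} k k' (x y : nat -> S) : k <= k' -> agree k' x y -> agree k x y.
Proof. by move=> hk H i hi; apply: H; apply: leq_trans hk. Qed.

Lemma SFT_shift (S : finType) (X : (nat -> S) -> Prop) : SFT X -> forall x, X x -> X (shift x).
Proof.
move=> [N [F [_ H]]] x /H Hx; apply/H => i; have := Hx i.+1.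
suff -> : [seq shift x (i + j) | j <- iota 0 N.+1] = [seq x (i.+1 + j) | j <- iota 0 N.+1] by [].
by apply: eq_map => j /=; rewrite /shift addSn.
Qed.

Lemma Z_sh {S : Type} (Z : (nat -> S) -> Prop) : (forall x, Z x -> Z (shift x)) ->
  forall j x, Z x -> Z (sh j x).
Proof. move=> hZ; elim=> [|j IH] x Zx; first by rewrite sh0. by rewrite -shiftS; apply: hZ; apply: IH. Qed.

Lemma SFT_closed (S : finType) (X : (nat -> S) -> Prop) : SFT X ->
  forall x, (forall K, exists w, X w /\ agree K w x) -> X x.
Proof.
move=> [N [F [_ H]]] x Hx; apply/H => i.
have [w [/H Hw Hwx]] := Hx (i + N.+1); have := Hw i.
suff -> : [seq w (i+j) | j <- iota 0 N.+1] = [seq x (i+j) | j <- iota 0 N.+1] by [].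
apply/eq_in_map => j; rewrite mem_iota add0n => /andP [_ hj].
by apply: Hwx; rewrite ltn_add2l.
Qed.

Lemma equi_sh {A B : Type} (Z : (nat -> A) -> Prop) (p : (nat -> A) -> (nat -> B)) :
  (forall x, Z x -> Z (shift x)) -> (forall x, Z x -> p (shift x) = shift (p x)) ->
  forall j x, Z x -> p (sh j x) = sh j (p x).
Proof.
move=> hZ hp j; elim: j => [|j IH] x Zx; first by rewrite !sh0.
by rewrite -!shiftS hp ?IH //; apply: Z_sh.
Qed.

Lemma per_sh {A : Type} (p : nat -> A) m : (forall i, p (i + m) = p i) -> forall j, sh (m * j) p = p.
Proof.
move=> H j; apply: functional_extensionality => i; rewrite /sh.
elim: j => [|j IH]; first by rewrite muln0.
by rewrite mulnS -addnA addnC H IH.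
Qed.

Lemma per_CR {S : Type} (Z : (nat -> S) -> Prop) : (forall x, Z x -> Z (shift x)) ->
  forall p m, Z p -> 0 < m -> (forall i, p (i + m) = p i) -> CR Z p.
Proof.
move=> hZ p m Zp m0 H; split => // k.
exists m, (fun i => sh i p); split => //.
- by have := per_sh H 1; rewrite muln1.
- by move=> i _; apply: Z_sh.
- by move=> i _ l _; rewrite shiftS.
Qed.

Lemma chain_perturb {S : Type} k m (c c' : nat -> nat -> S) :
  (forall i, i < m -> agree k (shift (c i)) (c i.+1)) ->
  (forall i, i <= m -> agree k.+1 (c' i) (c i)) ->
  forall i, i < m -> agree k (shift (c' i)) (c' i.+1).
Proof.
move=> Hc Hc' i hi l hl.
have e1 : c' i l.+1 = c i l.+1 by apply: Hc'; [exact: ltnW | by []].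
have e2 : c' i.+1 l = c i.+1 l by apply: Hc'; [by [] | exact: ltnW].
rewrite /shift e1 e2; exact: (Hc i hi l hl).
Qed.

Lemma CR_closed {S : Type} (Z : (nat -> S) -> Prop) y : Z y ->
  (forall K, exists w, CR Z w /\ agree K w y) -> CR Z y.
Proof.
move=> Zy H; split => // k.
have [w [[Zw Hw] Hwy]] := H k.+1.
have [m [c [m0 c0 cm Zc Hc]]] := Hw k.
exists m, (fun i => if (i == 0) || (i == m) then y else c i); split => //.
- by rewrite eqxx orbT.
- by move=> i hi; case: ifP => // _; apply: Zc.
- apply: (chain_perturb Hc) => i _.
  case: ifP => [/orP [] /eqP ->|_ //]; rewrite ?c0 ?cm; exact: agree_sym.
Qed.

Lemma CR_per (S : finType) (Z : (nat -> S) -> Prop) : SFT Z -> forall y, CR Z y ->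
  forall K, exists p m, [/\ Z p, 0 < m, (forall i, p (i + m) = p i) & agree K y p].
Proof.
move=> hS y [Zy Hy] K; case: hS => [N [F [_ HF]]].
have [m [c [m0 c0 cm Zc Hc]]] := Hy (K + N.+1).
set k := K + N.+1.
pose cc i := c (i %% m).
have Hcc : forall i, agree k (shift (cc i)) (cc i.+1).
  move=> i; have hr := ltn_pmod i m0.
  have -> : cc i.+1 = c (i %% m).+1.
    rewrite /cc -addn1 -modnDml addn1.
    case: (ltngtP (i %% m).+1 m) => [h|h|h]; first by rewrite modn_small.
    - by move: h; rewrite ltnS leqNgt hr.
    - by rewrite h modnn c0 cm.
  by apply: Hc.
have Hj : forall j l i, j + l < k -> cc (i + j) l = cc i (j + l).
  elim => [|j IH] l i hjl; first by rewrite addn0 add0n.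
  rewrite addnS -(Hcc (i + j) l); last by apply: leq_ltn_trans hjl; rewrite leq_addl.
  by rewrite /shift IH ?addnS ?addSn //; rewrite addnS -addSn.
exists (fun i => cc i 0), m; split => //.
- apply/HF => i.
  have Zcc : Z (cc i) by apply: Zc; apply: ltnW; apply: ltn_pmod.
  have := (proj1 (HF _) Zcc) 0.
  suff -> : [seq cc (i + j) 0 | j <- iota 0 N.+1] = [seq cc i (0 + j) | j <- iota 0 N.+1] by [].
  apply/eq_in_map => j; rewrite mem_iota add0n => /andP [_ hj].
  rewrite Hj ?addn0 ?add0n //; apply: leq_trans hj _; exact: leq_addl.
- by move=> i; rewrite /cc modnDr.
- move=> i hi; rewrite -(add0n i) Hj; last by rewrite addn0 /k; apply: leq_trans hi _; exact: leq_addr.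
  by rewrite addn0 add0n /cc mod0n c0.
Qed.

Lemma cont_comp {A B C : Type} (Z : (nat -> A) -> Prop) (Z' : (nat -> B) -> Prop)
  (p : (nat -> A) -> (nat -> B)) (p' : (nat -> B) -> (nat -> C)) :
  cont_on Z p -> (forall x, Z x -> Z' (p x)) -> cont_on Z' p' -> cont_on Z (fun x => p' (p x)).
Proof.
move=> hp hZ hp' x Zx k.
have [m1 H1] := hp' _ (hZ _ Zx) k.
have [m2 H2] := hp x Zx m1.
by exists m2 => y Zy a; apply: H1; [exact: hZ | exact: H2].
Qed.

Lemma cluster (S : finType) (s : nat -> nat -> S) :
  exists z, forall K J, exists j, J <= j /\ agree K (s j) z.
Proof.
pose good K (x : nat -> S) := forall J, exists j, J <= j /\ agree K (s j) x.
have step : forall K x, good K x -> exists x', good K.+1 x' /\ agree K x x'.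
  move=> K x gx; apply: NNPP => Hn.
  pose xa (a : S) := fun i => if i == K then a else x i.
  have nJ : forall a, exists J, forall j, J <= j -> ~ agree K.+1 (s j) (xa a).
    move=> a; apply: NNPP => Hn2; apply: Hn; exists (xa a); split.
    - move=> J; apply: NNPP => Hn3; apply: Hn2; exists J => j hj ha.
      by apply: Hn3; exists j.
    - by move=> i hi; rewrite /xa (ltn_eqF hi).
  pose Jf a := proj1_sig (constructive_indefinite_description _ (nJ a)).
  have HJf a := proj2_sig (constructive_indefinite_description _ (nJ a)).
  have [j [hj ag]] := gx (\max_(a : S) Jf a).
  apply: (HJf (s j K) j).
  - apply: leq_trans hj; exact: (leq_bigmax (s j K)).
  - move=> i; rewrite ltnS leq_eqVlt => /orP [/eqP ->|hi]; first by rewrite /xa eqxx.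
    by rewrite /xa (ltn_eqF hi) ag.
have step' : forall K x, exists x', good K x -> good K.+1 x' /\ agree K x x'.
  move=> K x; case: (classic (good K x)) => [/step [x' H]|H]; first by exists x'.
  by exists x => /H.
pose f K x := proj1_sig (constructive_indefinite_description _ (step' K x)).
have Hf K x := proj2_sig (constructive_indefinite_description _ (step' K x)).
pose xs := fix xs K := if K is K'.+1 then f K' (xs K') else s 0.
have gxs : forall K, good K (xs K).
  elim => [|K IH]; first by move=> J; exists J; split.
  exact: (Hf K (xs K) IH).1.
have axs : forall K, agree K (xs K) (xs K.+1) by move=> K; exact: (Hf K (xs K) (gxs K)).2.
have axs2 : forall d K, agree K (xs K) (xs (K + d)).
  elim => [|d IH] K; first by rewrite addn0.
  move=> i hi; rewrite IH // addnS; apply: axs; apply: leq_trans hi _; exact: leq_addr.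
exists (fun i => xs i.+1 i) => K J.
have [j [hj ag]] := gxs K J; exists j; split => // i hi.
rewrite ag // -(subnKC hi) (axs2 (K - i.+1) i.+1) //.
Qed.

Theorem lemma4p2 (S : nat -> finType) (X : forall n, (nat -> S n) -> Prop)
  (pi : forall n, (nat -> S n.+1) -> (nat -> S n))
  (hX : forall n, SFT (X n))
  (hmap : forall n x, X n.+1 x -> X n (pi n x))
  (hcont : forall n, cont_on (X n.+1) (pi n))
  (hequi : forall n x, X n.+1 x -> pi n (shift x) = shift (pi n x))
  (hmlc : MLC1 X pi) :
  MLC1 (fun n => CR (X n)) pi.
Proof.
move=> n a; split => [[y [hy <-]] | [b [[z [hz <-]] <-]]].
- pose q x := pi n (pi n.+1 x).
  have hq : cont_on (X n.+2) q := cont_comp (hcont n.+1) (hmap n.+1) (hcont n).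
  have hsh2 := SFT_shift (hX n.+2).
  have hqe : forall x, X n.+2 x -> q (shift x) = shift (q x).
    by move=> x Zx; rewrite /q hequi // hequi //; apply: hmap.
  have Hk : forall k, exists z, CR (X n.+2) z /\ agree k (q z) (pi n y).
    move=> k; have [M HM] := hcont n y hy.1 k.
    have [p [m [Zp m0 pp ayp]]] := CR_per (hX n.+1) hy M.
    have apy : agree k (pi n y) (pi n p) := HM p Zp ayp.
    have [a' [[w [Zw ea]] qw]] := proj1 (hmlc n (pi n p)) (ex_intro _ p (conj Zp erefl)).
    have qw' : q w = pi n p by rewrite /q ea.
    pose s j := sh (m * j) w.
    have Zs : forall j, X n.+2 (s j) by move=> j; apply: Z_sh.
    have qs : forall j, q (s j) = pi n p.
      move=> j; rewrite /s (equi_sh hsh2 hqe) // qw'.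
      rewrite -(equi_sh (SFT_shift (hX n.+1)) (hequi n)) //.
      by rewrite per_sh.
    have [zeta Hz] := cluster s.
    have Zz : X n.+2 zeta.
      apply: (SFT_closed (hX n.+2)) => K; have [j [_ ag]] := Hz K 0.
      by exists (s j).
    exists zeta; split.
    + split => // k'.
      have [j1 [_ ag1]] := Hz k'.+1 0.
      have [j2 [hj2 ag2]] := Hz k'.+1 j1.+1.
      have hle : m * j1 < m * j2 by rewrite ltn_pmul2l.
      pose L := m * j2 - m * j1.
      pose d i := sh (m * j1 + i) w.
      exists L, (fun i => if (i == 0) || (i == L) then zeta else d i); split => //.
      * by rewrite subn_gt0.
      * by rewrite eqxx orbT.
      * by move=> i _; case: ifP => // _; apply: Z_sh.
      * apply: (@chain_perturb _ k' L d) => [i _ l _|i _].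
          by rewrite /d shiftS addnS.
        case: ifP => [/orP [] /eqP ->|_]; last by move=> l hl.
        - rewrite /d addn0; exact: (agree_sym ag1).
        - rewrite /d /L subnKC; [exact: (agree_sym ag2) | exact: ltnW].
    + have [M' HM'] := hq zeta Zz k.
      have [j [_ ag]] := Hz M' 0.
      apply: (agree_trans (HM' (s j) (Zs j) (agree_sym ag))).
      by rewrite qs; apply: agree_sym.
  pose zs k := proj1_sig (constructive_indefinite_description _ (Hk k)).
  have Hzs k := proj2_sig (constructive_indefinite_description _ (Hk k)).
  have [zeta Hz] := cluster zs.
  have Zz : X n.+2 zeta.
    apply: (SFT_closed (hX n.+2)) => K; have [j [_ ag]] := Hz K 0.
    by exists (zs j); split => //; case: (Hzs j) => [[]].
  exists (pi n.+1 zeta); split.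
  + exists zeta; split => //; apply: CR_closed => // K.
    have [j [_ ag]] := Hz K 0; exists (zs j); split => //; exact: (Hzs j).1.
  + apply: functional_extensionality => i.
    have [M HM] := hq zeta Zz i.+1.
    have [j [hj ag]] := Hz M i.+1.
    have Zj : X n.+2 (zs j) by case: (Hzs j) => [[]].
    have e1 := HM (zs j) Zj (agree_sym ag) i (ltnSn i).
    rewrite -/(q zeta) e1; apply: (Hzs j).2; exact: leq_trans (ltnSn i) hj.
- exists (pi n.+1 z); split => //.
  have Zz := hz.1.
  apply: CR_closed; first by apply: hmap.
  move=> K; have [M HM] := hcont n.+1 z Zz K.
  have [p [m [Zp m0 pp azp]]] := CR_per (hX n.+2) hz M.
  exists (pi n.+1 p); split; last by apply: agree_sym; apply: HM.
  apply: (per_CR (SFT_shift (hX n.+1)) (hmap _ _ Zp) m0) => i.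
  have := congr1 (fun f => f i) (equi_sh (SFT_shift (hX n.+2)) (hequi n.+1) m Zp).
  have e : sh m p = p by have := per_sh pp 1; rewrite muln1.
  by rewrite /= e /sh addnC => <-.
Qed.
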